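(* Let $\mathbb F$ be an algebraically closed field, let $S$ be a left noetherian domain which is an $\mathbb F$-algebra with trivial center (i.e. $Z(S)=\mathbb F$), and let $B=S[x]$ be the usual polynomial ring in one central variable $x$ over $S$. Let $I=Bf_1+\cdots+Bf_r$ be a left ideal of $B$, where each $f_i\neq 0$ is normal in $B$ (i.e. $Bf_i=f_iB$) and has leading coefficient $\mathrm{lc}(f_i)\in S^*$. If $V(I)=\emptyset$, then $I=B$.
   Context: $B=S[x]$ is regarded as a skew PBW extension of $S$ in one variable. For $z\in S$, $\langle z\rangle$ denotes the two-sided ideal of $B$ generated by $x-z$; $z$ is a root of $f\in B$ iff $f\in\langle z\rangle$. For a subset $T\subseteq B$, $V(T)=\{z\in S: f\in\langle z\rangle \text{ for all } f\in T\}$. $S^*$ denotes the group of units of $S$; $\mathrm{lc}(f)$ is the coefficient of the highest power of $x$ in $f$. *)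

(* Defs.v *)
From HB Require Import structures.
From mathcomp Require Import all_boot all_order all_algebra.
Set Implicit Arguments. Unset Strict Implicit. Unset Printing Implicit Defensive.
Import GRing.Theory.
Local Open Scope ring_scope.

Definition is_left_ideal (R : nzRingType) (P : R -> Prop) : Prop :=
  [/\ P 0, (forall a b, P a -> P b -> P (a + b)) & (forall r a, P a -> P (r * a))].

Definition left_noetherian (R : nzRingType) : Prop :=
  forall C : nat -> R -> Prop,
    (forall n, is_left_ideal (C n)) ->
    (forall n a, C n a -> C n.+1 a) ->
    exists N, forall n, (N <= n)%N -> forall a, C n a -> C N a.

(* Domain: nonzero ring without zero divisors (1 != 0 holds in an nzRing). *)
Definition is_domain (R : nzRingType) : Prop :=
  forall a b : R, a * b = 0 -> a = 0 \/ b = 0.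

Definition center_is_base (F : fieldType) (S : algType F) : Prop :=
  forall s : S, (forall t : S, s * t = t * s) -> exists c : F, s = c%:A.

Definition is_unit_elt (R : nzRingType) (u : R) : Prop :=
  exists v : R, v * u = 1 /\ u * v = 1.

Definition is_normal (R : nzRingType) (f : R) : Prop :=
  (forall g : R, exists h : R, g * f = f * h) /\
  (forall g : R, exists h : R, f * g = h * f).

Definition in_left_ideal_gen (R : nzRingType) (r : nat) (f : 'I_r -> R) (g : R)
  : Prop := exists c : 'I_r -> R, g = \sum_(i < r) c i * f i.

(* Membership in the two-sided ideal <z> of S[x] generated by x - z. *)
Definition in_root_ideal (S : nzRingType) (z : S) (g : {poly S}) : Prop :=
  exists n (a b : 'I_n -> {poly S}),
    g = \sum_(i < n) a i * ('X - z%:P) * b i.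

Definition Vset (S : nzRingType) (T : {poly S} -> Prop) (z : S) : Prop :=
  forall g, T g -> in_root_ideal z g.

(* Main.v *)
Require Import Defs.
From HB Require Import structures.
From mathcomp Require Import all_boot all_order all_algebra zify.
Import GRing.Theory.
Local Open Scope ring_scope.

Lemma coef_size (R : nzSemiRingType) (p : {poly R}) i : p`_i != 0 -> (i < size p)%N.
Proof. by apply: contraR; rewrite -leqNgt => H; rewrite nth_default. Qed.

Lemma normal_decomp (F : fieldType) (S : algType F)
  (Scenter : forall s : S, (forall t : S, s * t = t * s) -> exists c : F, s = c%:A)
  (f : {poly S}) (fnz : f != 0)
  (fn : forall g : {poly S}, exists h : {poly S}, g * f = f * h)
  (v : S) (vu : v * lead_coef f = 1) (uv : lead_coef f * v = 1) :
  exists m : {poly F}, map_poly (in_alg S) m = v%:P * f.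
Proof.
set u := lead_coef f; set m' := v%:P * f.
have fE : f = u%:P * m' by rewrite /m' mulrA -polyCM uv mul1r.
have szm : size m' = size f.
  apply/eqP; rewrite eqn_leq; apply/andP; split.
    apply: leq_trans (size_polyMleq _ _) _.
    have := size_polyC_leq1 v; case: (size v%:P) => [|[|//]] _ //=.
    by rewrite add0n leq_pred.
  have : m'`_(size f).-1 != 0 by rewrite coefCM -lead_coefE vu oner_neq0.
  move/coef_size; rewrite prednK // lt0n size_poly_eq0 //.
have m'mon : m' \is monic by rewrite monicE lead_coefE szm coefCM -lead_coefE vu.
have cent : forall i t, t * m'`_i = m'`_i * t.
  move=> i t.
  have [h Hh] := fn (u * t * v)%:P.
  have E : t%:P * m' = m' * h.
    have L : v%:P * ((u * t * v)%:P * f) = t%:P * m'.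
      rewrite [in LHS]fE !mulrA -!polyCM.
      by have -> : v * (u * t * v) * u = t by rewrite !mulrA vu mul1r -mulrA vu mulr1.
    by rewrite -L Hh mulrA.
  have m'nz : m' != 0 by rewrite -size_poly_eq0 szm size_poly_eq0.
  have [h0|hnz] := eqVneq h 0.
    move: E; rewrite h0 mulr0 => E.
    have := congr1 (fun p : {poly S} => p`_(size m').-1) E.
    rewrite /= coefCM -lead_coefE (monicP m'mon) mulr1 coef0 => ->.
    by rewrite mul0r mulr0.
  have hsz : (size h <= 1)%N.
    have H1 := size_polyMleq t%:P m'; rewrite E size_monicM // in H1.
    have H2 := size_polyC_leq1 t.
    have H3 : (0 < size m')%N by rewrite lt0n size_poly_eq0.
    lia.
  move: E; rewrite (size1_polyC hsz) => E.
  have Et : t = h`_0.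
    have := congr1 (fun p : {poly S} => p`_(size m').-1) E.
    by rewrite /= coefCM coefMC -lead_coefE (monicP m'mon) mulr1 mul1r.
  have := congr1 (fun p : {poly S} => p`_i) E.
  by rewrite /= coefCM coefMC -Et.
have ex : forall i, exists c : F, m'`_i == c%:A.
  by move=> i; have [c ->] := Scenter (m'`_i) (fun t => esym (cent i t)); exists c.
pose c i := xchoose (ex i).
exists (\poly_(i < size m') c i).
apply/polyP => i; rewrite coef_map coef_poly /=.
case: ltnP => Hi; first by apply/esym/eqP; exact: (xchooseP (ex i)).
by rewrite nth_default // scale0r.
Qed.
Lemma common_div (F : fieldType) r (m : 'I_r -> {poly F}) :
  exists a : 'I_r -> {poly F}, forall i, (\sum_(j < r) a j * m j) %| m i.
Proof.
elim: r m => [|r IH] m; first by exists (fun _ => 0) => -[].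
have [a' Ha'] := IH (fun j => m (lift ord0 j)).
set d' := \sum_(j < r) _ in Ha'.
have [u Hu] := Bezoutp d' (m ord0).
exists (fun j => if unlift ord0 j is Some k then u.1 * a' k else u.2).
have -> : \sum_(j < r.+1) (if unlift ord0 j is Some k then u.1 * a' k else u.2) * m j
   = u.1 * d' + u.2 * m ord0.
  rewrite big_ord_recl unlift_none addrC; congr (_ + _).
  rewrite /d' mulr_sumr; apply: eq_bigr => k _; by rewrite liftK mulrA.
move=> i; rewrite (eqp_dvdl _ Hu).
case: (unliftP ord0 i) => [k ->|->]; last exact: dvdp_gcdr.
exact: dvdp_trans (dvdp_gcdl _ _) (Ha' k).
Qed.



Theorem corollary4p23 (F : closedFieldType) (S : algType F)
  (Snoeth : left_noetherian S) (Sdom : is_domain S)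
  (Scenter : center_is_base S)
  (r : nat) (f : 'I_r -> {poly S})
  (fnz : forall i, f i != 0)
  (fnormal : forall i, is_normal (f i))
  (flc : forall i, is_unit_elt (lead_coef (f i)))
  (VI_empty : forall z : S, ~ Vset (in_left_ideal_gen f) z) :
  forall g : {poly S}, in_left_ideal_gen f g.
Proof.
move=> g.
have dec : forall i, exists p : S * {poly F},
    map_poly (in_alg S) p.2 = p.1%:P * f i /\
    f i = (lead_coef (f i))%:P * (p.1%:P * f i).
  move=> i; have [v [vu uv]] := flc i.
  have [m Hm] := @normal_decomp _ _ Scenter _ (fnz i) (fnormal i).1 _ vu uv.
  by exists (v, m); split => //=; rewrite mulrA -polyCM uv mul1r.
have [p Hp] := fin_all_exists dec.
pose m := fun i => (p i).2.
have [a Ha] := @common_div _ _ m.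
set d := \sum_(j < r) _ in Ha.
have [/closed_rootP [c Hc] | /negPn d1] := boolP (size d != 1).
  exfalso; apply: (VI_empty (c%:A)).
  move=> h [co ->].
  have fq : forall i, exists q, f i = q * ('X - (c%:A)%:P).
    move=> i; have /dvdpP [k Hk] := Ha i; have /factor_theorem [q Hq] := Hc.
    exists ((lead_coef (f i))%:P * (map_poly (in_alg S) (k * q))).
    rewrite {1}(Hp i).2 -(Hp i).1 -/(m i) Hk Hq !rmorphM /= map_polyXsubC.
    by rewrite !mulrA.
  have [q Hq] := fin_all_exists fq.
  exists r, (fun i => co i * q i), (fun _ => 1).
  by apply: eq_bigr => i _; rewrite mulr1 {1}Hq mulrA.
have dC : d = (d`_0)%:P by apply: size1_polyC; rewrite (eqP d1).
have d0 : d`_0 != 0.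
  by apply: contraTneq d1 => H; rewrite dC H size_poly0.
have one : 1 = \sum_(j < r) map_poly (in_alg S) ((d`_0)^-1%:P * a j) * ((p j).1%:P * f j).
  have : (d`_0)^-1%:P * d = 1 by rewrite {2}dC -polyCM mulVf.
  move/(congr1 (map_poly (in_alg S))); rewrite rmorph1 /d mulr_sumr rmorph_sum => <-.
  by apply: eq_bigr => j _; rewrite mulrA rmorphM /m /= (Hp j).1.
exists (fun j => g * map_poly (in_alg S) ((d`_0)^-1%:P * a j) * (p j).1%:P).
rewrite -[g in LHS]mulr1 one mulr_sumr; apply: eq_bigr => j _.
by rewrite !mulrA.
Qed.
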